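(* Let $E$ be any subset of the equations $\{(\mathsf e),(\mathsf c),(!\mathsf e),(!\mathsf c),(!\mathsf a1),(!\mathsf a2)\}$ and let $\mathcal V$ be the variety of integral interior $r\ell u$-groupoids satisfying all equations in $E$. Then $\mathcal V$ has the finite embeddability property.
   Context: A unital groupoid is a set with a (not necessarily associative) binary operation $\cdot$ and a two-sided unit $1$. An $r\ell u$-groupoid is an algebra $(A,\wedge,\vee,\cdot,\backslash,/,1)$ such that $(A,\wedge,\vee)$ is a lattice with order $\le$, $(A,\cdot,1)$ is a unital groupoid, and $x\cdot y\le z\iff y\le x\backslash z\iff x\le z/y$. An interior $r\ell u$-groupoid additionally has a unary operation $!$ with $1\le !1$, $!x\cdot !y\le !(x\cdot y)$, $!x\le x$, $!x\le !!x$, and $x\le y\Rightarrow !x\le !y$. It is integral if $x\le 1$ for all $x$. Equations: $(\mathsf e)$ $x\cdot y\le y\cdot x$; $(\mathsf c)$ $x\le x\cdot x$; $(!\mathsf c)$ $!x\le !x\cdot !x$; $(!\mathsf e)$ $!x\cdot y=y\cdot !x$; $(!\mathsf a1)$ $!x\cdot(y\cdot z)=(!x\cdot y)\cdot z$; $(!\mathsf a2)$ $x\cdot(y\cdot !z)=(x\cdot y)\cdot !z$. A partial subalgebra of an algebra $\mathbf C$ is a subset $B$ with $f^{\mathbf B}(\vec b)=f^{\mathbf C}(\vec b)$ if this lies in $B$ and undefined otherwise. An embedding of a partial algebra $\mathbf B$ into an algebra $\mathbf D$ is an injective map $h$ with $h(f^{\mathbf B}(\vec b))=f^{\mathbf D}(h(\vec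 b))$ whenever the left side is defined. A class $\mathcal K$ has the finite embeddability property (FEP) if every finite partial subalgebra of a member of $\mathcal K$ embeds into a finite member of $\mathcal K$. *)

(* Defs.v *)
From Stdlib Require Import List.
Set Implicit Arguments.

Record IGroupoid := {
  car  :> Type;
  meet : car -> car -> car;
  join : car -> car -> car;
  mul  : car -> car -> car;
  ldiv : car -> car -> car;
  rdiv : car -> car -> car;
  one  : car;
  bang : car -> car
}.

Section Laws.
Variable A : IGroupoid.

Definition le (x y : A) : Prop := meet A x y = x.

Definition is_lattice : Prop :=
  (forall x y z, meet A x (meet A y z) = meet A (meet A x y) z) /\
  (forall x y z, join A x (join A y z) = join A (join A x y) z) /\
  (forall x y, meet A x y = meet A y x) /\
  (forall x y, join A x y = join A y x) /\
  (forall x y, meet A x (join A x y) = x) /\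
  (forall x y, join A x (meet A x y) = x).

Definition is_unital_groupoid : Prop :=
  forall x, mul A (one A) x = x /\ mul A x (one A) = x.

Definition is_residuated : Prop :=
  forall x y z,
    (le (mul A x y) z <-> le y (ldiv A x z)) /\
    (le y (ldiv A x z) <-> le x (rdiv A z y)).

Definition is_interior : Prop :=
  le (one A) (bang A (one A)) /\
  (forall x y, le (mul A (bang A x) (bang A y)) (bang A (mul A x y))) /\
  (forall x, le (bang A x) x) /\
  (forall x, le (bang A x) (bang A (bang A x))) /\
  (forall x y, le x y -> le (bang A x) (bang A y)).

Definition is_integral : Prop := forall x, le x (one A).

Definition integral_interior_rlu : Prop :=
  is_lattice /\ is_unital_groupoid /\ is_residuated /\ is_interior /\ is_integral.

End Laws.
Arguments le {A} x y.

Inductive Eqn := Eq_e | Eq_c | Eq_bc | Eq_be | Eq_ba1 | Eq_ba2.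

Definition satisfies (A : IGroupoid) (q : Eqn) : Prop :=
  match q with
  | Eq_e   => forall x y : A, le (mul A x y) (mul A y x)
  | Eq_c   => forall x : A, le x (mul A x x)
  | Eq_bc  => forall x : A, le (bang A x) (mul A (bang A x) (bang A x))
  | Eq_be  => forall x y : A, mul A (bang A x) y = mul A y (bang A x)
  | Eq_ba1 => forall x y z : A,
                mul A (bang A x) (mul A y z) = mul A (mul A (bang A x) y) z
  | Eq_ba2 => forall x y z : A,
                mul A x (mul A y (bang A z)) = mul A (mul A x y) (bang A z)
  end.

Definition in_variety (E : Eqn -> Prop) (A : IGroupoid) : Prop :=
  integral_interior_rlu A /\ forall q, E q -> satisfies A q.

Definition finite_type (T : Type) : Prop := exists l : list T, forall x : T, In x l.

Definition finite_subset (T : Type) (B : T -> Prop) : Prop :=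
  exists l : list T, forall x, B x -> In x l.

(* An embedding of the partial subalgebra B of C into D.  The map is given as a
   total function on C; only its values on B matter (D is always inhabited by 1). *)
Definition partial_embedding (C D : IGroupoid) (B : C -> Prop) (h : C -> D) : Prop :=
  (forall x y, B x -> B y -> h x = h y -> x = y) /\
  (forall x y, B x -> B y -> B (meet C x y) -> h (meet C x y) = meet D (h x) (h y)) /\
  (forall x y, B x -> B y -> B (join C x y) -> h (join C x y) = join D (h x) (h y)) /\
  (forall x y, B x -> B y -> B (mul C x y) -> h (mul C x y) = mul D (h x) (h y)) /\
  (forall x y, B x -> B y -> B (ldiv C x y) -> h (ldiv C x y) = ldiv D (h x) (h y)) /\
  (forall x y, B x -> B y -> B (rdiv C x y) -> h (rdiv C x y) = rdiv D (h x) (h y)) /\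
  (B (one C) -> h (one C) = one D) /\
  (forall x, B x -> B (bang C x) -> h (bang C x) = bang D (h x)).

Definition FEP (E : Eqn -> Prop) : Prop :=
  forall (C : IGroupoid), in_variety E C ->
  forall (B : C -> Prop), finite_subset (T:=C) B ->
  exists (D : IGroupoid), in_variety E D /\ finite_type D /\
    exists h : C -> D, partial_embedding C D B h.

(* Main.v *)
Require Import Defs.
From Stdlib Require Import List Arith Lia Classical ClassicalEpsilon FunctionalExtensionality PropExtensionality ProofIrrelevance.
Import ListNotations.

Definition good {T} (R : T -> T -> Prop) (f : nat -> T) := exists i j, i < j /\ R (f i) (f j).
Definition wqo_on {T} (P : T -> Prop) (R : T -> T -> Prop) :=
  forall f, (forall n, P (f n)) -> good R f.
Definition sincr (phi : nat -> nat) := forall n, phi n < phi (S n).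

Lemma sincr_lt phi : sincr phi -> forall i j, i < j -> phi i < phi j.
Proof. intros H i j Hij. induction Hij. apply H. specialize (H m). lia. Qed.

Lemma sincr_ge phi : sincr phi -> forall k, k <= phi k.
Proof. intros H k. induction k. lia. specialize (H k). lia. Qed.

Fixpoint iterc (N : nat) (g : nat -> nat) (k : nat) : nat :=
  match k with 0 => N | S k => g (iterc N g k) end.

Lemma inf_or_ev (Q : nat -> Prop) :
  (exists phi, sincr phi /\ forall k, Q (phi k)) \/ (exists N, forall n, N <= n -> ~ Q n).
Proof.
  destruct (classic (forall N, exists n, N <= n /\ Q n)) as [H|H].
  - left.
    assert (Hc : forall N, {n | N <= n /\ Q n}) by
      (intro N; apply constructive_indefinite_description; auto).
    set (g := fun i => proj1_sig (Hc (S i))).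
    assert (Hg : forall i, S i <= g i /\ Q (g i)) by (intro i; unfold g; apply proj2_sig).
    exists (iterc (proj1_sig (Hc 0)) g). split.
    + intro k. simpl. destruct (Hg (iterc (proj1_sig (Hc 0)) g k)). lia.
    + intro k; destruct k; simpl.
      * exact (proj2 (proj2_sig (Hc 0))).
      * apply Hg.
  - right. apply not_all_ex_not in H. destruct H as [N HN]. exists N. intros n Hn HQ. apply HN. eauto.
Qed.

Lemma wqo_subseq {T} (P : T -> Prop) R : wqo_on P R -> forall f, (forall n, P (f n)) ->
  exists phi, sincr phi /\ forall k, R (f (phi k)) (f (phi (S k))).
Proof.
  intros W f Hf.
  destruct (inf_or_ev (fun i => ~ exists j, i < j /\ R (f i) (f j))) as [[phi [Hphi Hq]] | [N HN]].
  - exfalso. destruct (W (fun k => f (phi k)) (fun k => Hf _)) as [i [j [Hij HR]]].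
    apply (Hq i). exists (phi j). split; auto. apply sincr_lt; auto.
  - assert (Hc : forall i, N <= i -> exists j, i < j /\ R (f i) (f j)).
    { intros i Hi. apply NNPP. apply HN; auto. }
    assert (Hc' : forall i, {j | N <= i -> i < j /\ R (f i) (f j)}).
    { intro i. apply constructive_indefinite_description.
      destruct (le_lt_dec N i) as [h|h].
      - destruct (Hc i h) as [j Hj]. exists j; auto.
      - exists 0. intro; lia. }
    set (g := fun i => proj1_sig (Hc' i)).
    assert (Hg : forall i, N <= i -> i < g i /\ R (f i) (f (g i))) by
      (intro i; unfold g; apply proj2_sig).
    assert (HN' : forall k, N <= iterc N g k).
    { induction k; simpl. lia. destruct (Hg _ IHk). lia. }
    exists (iterc N g). split.
    + intro k. simpl. apply Hg. auto.
    + intro k. simpl. apply Hg. auto.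
Qed.

Lemma wqo_prod {T U} (P : T -> Prop) (Q : U -> Prop) R1 R2 :
  (forall x y z, R1 x y -> R1 y z -> R1 x z) ->
  wqo_on P R1 -> wqo_on Q R2 ->
  wqo_on (fun p => P (fst p) /\ Q (snd p)) (fun p q => R1 (fst p) (fst q) /\ R2 (snd p) (snd q)).
Proof.
  intros Tr W1 W2 f Hf.
  destruct (wqo_subseq P R1 W1 (fun n => fst (f n)) (fun n => proj1 (Hf n))) as [phi [Hphi HR]].
  destruct (W2 (fun k => snd (f (phi k))) (fun k => proj2 (Hf _))) as [i [j [Hij H2]]].
  exists (phi i), (phi j). split. apply sincr_lt; auto. split; auto.
  clear H2. induction Hij. apply HR. eapply Tr; eauto.
Qed.

Lemma pigeon n : forall (f : nat -> nat), (forall k, f k < n) -> exists i j, i < j /\ f i = f j.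
Proof.
  induction n as [|m IH]; intros f Hf.
  - specialize (Hf 0). lia.
  - destruct (classic (exists k, f k = m)) as [[k0 H0]|H0].
    + destruct (classic (exists j, k0 < j /\ f j = m)) as [[j [Hj1 Hj2]]|H1].
      * exists k0, j. split; auto. congruence.
      * destruct (IH (fun k => f (S k0 + k))) as [i [j [Hij Heq]]].
        { intro k. specialize (Hf (S k0 + k)). assert (f (S k0 + k) <> m).
          { intro E. apply H1. exists (S k0 + k). split; auto. lia. } lia. }
        exists (S k0 + i), (S k0 + j). split; auto. lia.
    + apply IH. intro k. specialize (Hf k). assert (f k <> m) by (intro E; apply H0; eauto). lia.
Qed.

Lemma least (Q : nat -> Prop) : (exists n, Q n) -> exists n, Q n /\ forall m, Q m -> n <= m.
Proof.
  intros [n Hn]. revert Hn. induction n as [n IH] using lt_wf_ind. intro Hn.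
  destruct (classic (exists m, m < n /\ Q m)) as [[m [Hm Qm]]|H].
  - exact (IH m Hm Qm).
  - exists n; split; auto. intros m Qm. destruct (le_lt_dec n m); auto. exfalso; eauto.
Qed.

Inductive tree (A : Type) : Type :=
| Eps | Hole | Leaf (a : A) | Mul (t1 t2 : tree A) | Bang (t : tree A).
Arguments Eps {A}. Arguments Hole {A}. Arguments Leaf {A} a. Arguments Mul {A} t1 t2.
Arguments Bang {A} t.

Inductive emb {A} : tree A -> tree A -> Prop :=
| e_eps : emb Eps Eps
| e_hole : emb Hole Hole
| e_leaf a : emb (Leaf a) (Leaf a)
| e_ml t s1 s2 : emb t s1 -> emb t (Mul s1 s2)
| e_mr t s1 s2 : emb t s2 -> emb t (Mul s1 s2)
| e_mm t1 t2 s1 s2 : emb t1 s1 -> emb t2 s2 -> emb (Mul t1 t2) (Mul s1 s2)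
| e_b t s : emb t s -> emb t (Bang s)
| e_bb t s : emb t s -> emb (Bang t) (Bang s).

Fixpoint size {A} (t : tree A) : nat :=
  match t with Mul a b => S (size a + size b) | Bang a => S (size a) | _ => 0 end.

Lemma emb_refl {A} (t : tree A) : emb t t.
Proof. induction t. 1-3: constructor. apply e_mm; auto. apply e_bb; auto. Qed.

Lemma emb_trans {A} (t s r : tree A) : emb t s -> emb s r -> emb t r.
Proof.
  intros H1 H2. revert t H1. induction H2; intros t0 H0; auto.
  - apply e_ml; auto.
  - apply e_mr; auto.
  - inversion H0; subst.
    + apply e_ml; auto.
    + apply e_mr; auto.
    + apply e_mm; auto.
  - apply e_b; auto.
  - inversion H0; subst.
    + apply e_b; auto.
    + apply e_bb; auto.
Qed.

Definition child {A} (s t : tree A) : Prop :=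
  (exists r, t = Mul s r) \/ (exists r, t = Mul r s) \/ t = Bang s.

Lemma child_emb {A} (s t : tree A) : child s t -> emb s t.
Proof.
  intros [[r ->]|[[r ->]| ->]]. apply e_ml, emb_refl. apply e_mr, emb_refl. apply e_b, emb_refl.
Qed.

Lemma child_size {A} (s t : tree A) : child s t -> size s < size t.
Proof. intros [[r ->]|[[r ->]| ->]]; simpl; lia. Qed.

Section MBS.
Variable A : Type.
Definition bad (f : nat -> tree A) := forall i j, i < j -> ~ emb (f i) (f j).
Definition Ext (l : list (tree A)) :=
  exists f, bad f /\ forall i, i < length l -> f i = nth i l Eps.

Lemma step_lemma l : Ext l -> exists t, Ext (l ++ [t]) /\ forall t', Ext (l ++ [t']) -> size t <= size t'.
Proof.
  intros [f [Hb Hp]].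
  assert (H1 : Ext (l ++ [f (length l)])).
  { exists f. split; auto. intros i Hi. rewrite length_app in Hi. simpl in Hi.
    destruct (Nat.eq_dec i (length l)) as [->|Hne].
    - rewrite nth_middle. auto.
    - rewrite app_nth1 by lia. apply Hp. lia. }
  destruct (least (fun m => exists t, Ext (l ++ [t]) /\ size t = m)) as [m [[t [Ht Hs]] Hmin]].
  { eauto. }
  exists t. split; auto. intros t' Ht'. subst. apply Hmin. eauto.
Qed.

Definition stepT (x : {l | Ext l}) : {l | Ext l} :=
  match x with exist _ l H =>
    match constructive_indefinite_description _ (step_lemma l H) with
    | exist _ t Ht => exist _ (l ++ [t]) (proj1 Ht) end end.

Lemma stepT_spec x : exists t, proj1_sig (stepT x) = proj1_sig x ++ [t] /\
  forall t', Ext (proj1_sig x ++ [t']) -> size t <= size t'.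
Proof.
  destruct x as [l H]. simpl.
  destruct (constructive_indefinite_description _ (step_lemma l H)) as [t Ht]. simpl.
  exists t. split; auto. apply Ht.
Qed.

Fixpoint seqT (x0 : {l | Ext l}) n := match n with 0 => x0 | S n => stepT (seqT x0 n) end.

Lemma mbs_exists : (exists f, bad f) -> exists m, bad m /\
  forall n g, bad g -> (forall i, i < n -> g i = m i) -> size (m n) <= size (g n).
Proof.
  intros [f0 Hf0].
  assert (E0 : Ext []) by (exists f0; split; auto; intros i Hi; simpl in Hi; lia).
  set (x0 := exist _ [] E0 : {l | Ext l}).
  set (L := fun n => proj1_sig (seqT x0 n)).
  assert (Hlen : forall n, length (L n) = n).
  { induction n. reflexivity. unfold L in *; simpl.
    destruct (stepT_spec (seqT x0 n)) as [t [-> _]]. rewrite length_app. simpl. lia. }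
  assert (Hpre : forall n k i, i < n -> nth i (L (n + k)) Eps = nth i (L n) Eps).
  { intros n k i Hi. induction k. rewrite Nat.add_0_r. auto.
    rewrite Nat.add_succ_r. unfold L in *; simpl.
    destruct (stepT_spec (seqT x0 (n + k))) as [t [-> _]].
    rewrite app_nth1; auto. rewrite (Hlen (n+k)). lia. }
  set (m := fun n => nth n (L (S n)) Eps).
  assert (Hm : forall n i, i < n -> nth i (L n) Eps = m i).
  { intros n i Hi. unfold m. replace n with (S i + (n - S i)) by lia. apply Hpre. lia. }
  exists m. split.
  - intros i j Hij He.
    destruct (proj2_sig (seqT x0 (S j))) as [g [Hg Hgp]].
    fold (L (S j)) in Hgp. rewrite Hlen in Hgp.
    apply (Hg i j Hij). rewrite (Hgp i) by lia. rewrite (Hgp j) by lia.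
    rewrite !Hm by lia. auto.
  - intros n g Hg Hgm.
    destruct (stepT_spec (seqT x0 n)) as [t [Ht Hmin]].
    assert (Hmt : m n = t).
    { unfold m, L. simpl. rewrite Ht. fold (L n). rewrite <- (Hlen n) at 1. apply nth_middle. }
    rewrite Hmt. apply Hmin. exists g. split; auto. fold (L n). intros i Hi.
    rewrite length_app, Hlen in Hi; simpl in Hi.
    destruct (Nat.eq_dec i n) as [->|Hne].
    + rewrite <- (Hlen n) at 2. rewrite nth_middle. auto.
    + rewrite app_nth1 by (rewrite Hlen; lia). rewrite Hm by lia. apply Hgm. lia.
Qed.
End MBS.

Definition isMul {A} (t : tree A) : Prop := match t with Mul _ _ => True | _ => False end.
Definition isBang {A} (t : tree A) : Prop := match t with Bang _ => True | _ => False end.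
Definition lch {A} (t : tree A) := match t with Mul a _ => a | Bang a => a | _ => t end.
Definition rch {A} (t : tree A) := match t with Mul _ b => b | _ => t end.

Theorem kruskal {A} (HA : forall f : nat -> A, exists i j, i < j /\ f i = f j) :
  wqo_on (fun _ : tree A => True) emb.
Proof.
  intros f0 _. apply NNPP; intro Hbad0.
  destruct (mbs_exists A) as [m [Hmb Hmin]].
  { exists f0. intros i j Hij He. apply Hbad0. exists i, j. auto. }
  set (Pc := fun s => exists n, child s (m n)).
  assert (Wc : wqo_on Pc emb).
  { intros g Hg. apply NNPP; intro Hng.
    assert (Hgb : forall i j, i < j -> ~ emb (g i) (g j)) by
      (intros i j Hij He; apply Hng; exists i, j; auto).
    assert (Hnk : forall k, {n | child (g k) (m n)}) by
      (intro k; apply constructive_indefinite_description; apply Hg).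
    set (nk := fun k => proj1_sig (Hnk k)).
    assert (Hnk' : forall k, child (g k) (m (nk k))) by (intro k; unfold nk; apply proj2_sig).
    destruct (least (fun x => exists k, nk k = x)) as [N [[k0 Hk0] HN]]; [exists (nk 0), 0; reflexivity|].
    set (h := fun i => if i <? N then m i else g (k0 + (i - N))).
    assert (Hhb : bad A h).
    { intros i j Hij He. unfold h in He.
      destruct (Nat.ltb_spec i N); destruct (Nat.ltb_spec j N).
      - exact (Hmb i j Hij He).
      - set (k := k0 + (j - N)) in *.
        assert (N <= nk k) by (apply HN; eauto).
        apply (Hmb i (nk k)); [lia|]. eapply emb_trans; [exact He|]. apply child_emb; auto.
      - lia.
      - apply (Hgb (k0 + (i - N)) (k0 + (j - N))); [lia|auto]. }
    specialize (Hmin N h Hhb).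
    assert (HhN : h N = g k0) by (unfold h; rewrite Nat.ltb_irrefl; f_equal; lia).
    rewrite HhN in Hmin.
    assert (Hc := child_size _ _ (Hnk' k0)). rewrite Hk0 in Hc.
    assert (size (m N) <= size (g k0)).
    { apply Hmin. intros i Hi. unfold h. destruct (Nat.ltb_spec i N); auto; lia. }
    lia. }
  assert (Hmbad : forall i j, i < j -> ~ emb (m i) (m j)) by exact Hmb.
  destruct (inf_or_ev (fun n => isMul (m n))) as [[phi [Hphi HQ]]|[N1 HN1]].
  { destruct (wqo_prod Pc Pc emb emb (@emb_trans A) Wc Wc
        (fun k => (lch (m (phi k)), rch (m (phi k))))) as [i [j [Hij [E1 E2]]]].
    - intro k. specialize (HQ k). simpl. destruct (m (phi k)) eqn:E; try contradiction.
      split; exists (phi k); rewrite E; unfold child; simpl; eauto.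
    - simpl in E1, E2. apply (Hmbad (phi i) (phi j)). apply sincr_lt; auto.
      pose proof (HQ i) as HQi; pose proof (HQ j) as HQj.
      destruct (m (phi i)); try contradiction. destruct (m (phi j)); try contradiction.
      simpl in *. apply e_mm; auto. }
  destruct (inf_or_ev (fun n => isBang (m n))) as [[phi [Hphi HQ]]|[N2 HN2]].
  { destruct (Wc (fun k => lch (m (phi k)))) as [i [j [Hij E1]]].
    - intro k. specialize (HQ k). exists (phi k). destruct (m (phi k)) eqn:E; try contradiction.
      simpl. right; right; auto.
    - apply (Hmbad (phi i) (phi j)). apply sincr_lt; auto.
      pose proof (HQ i) as HQi; pose proof (HQ j) as HQj.
      destruct (m (phi i)); try contradiction. destruct (m (phi j)); try contradiction.
      simpl in *. apply e_bb; auto. }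
  destruct (inf_or_ev (fun n => m n = Eps)) as [[phi [Hphi HQ]]|[N3 HN3]].
  { apply (Hmbad (phi 0) (phi 1)). apply Hphi. rewrite !HQ. constructor. }
  destruct (inf_or_ev (fun n => m n = Hole)) as [[phi [Hphi HQ]]|[N4 HN4]].
  { apply (Hmbad (phi 0) (phi 1)). apply Hphi. rewrite !HQ. constructor. }
  set (N := N1 + N2 + N3 + N4).
  assert (Hleaf : forall k, exists a, m (N + k) = Leaf a).
  { intro k. specialize (HN1 (N + k)). specialize (HN2 (N + k)).
    specialize (HN3 (N + k)). specialize (HN4 (N + k)).
    destruct (m (N + k)); simpl in *; eauto; exfalso.
    apply HN3; auto; lia. apply HN4; auto; lia. apply HN1; auto; lia. apply HN2; auto; lia. }
  destruct (Hleaf 0) as [a0 _].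
  set (lab := fun t : tree A => match t with Leaf a => a | _ => a0 end).
  destruct (HA (fun k => lab (m (N + k)))) as [i [j [Hij Heq]]].
  apply (Hmbad (N + i) (N + j)); [lia|].
  destruct (Hleaf i) as [ai Hai]. destruct (Hleaf j) as [aj Haj].
  simpl in Heq. rewrite Hai, Haj in *. simpl in Heq. subst. constructor.
Qed.

Module C1.

Section CLemmas.
Variable C : IGroupoid.
Variable HC : integral_interior_rlu C.

Local Notation mul := (mul C). Local Notation meet := (meet C). Local Notation join := (join C).
Local Notation one := (one C). Local Notation bang := (bang C).
Local Notation ldiv := (ldiv C). Local Notation rdiv := (rdiv C).

Lemma HL : is_lattice C. Proof. apply HC. Qed.
Lemma meetA x y z : meet x (meet y z) = meet (meet x y) z. Proof. apply HL. Qed.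
Lemma joinA x y z : join x (join y z) = join (join x y) z. Proof. apply HL. Qed.
Lemma meetC x y : meet x y = meet y x. Proof. apply HL. Qed.
Lemma joinC x y : join x y = join y x. Proof. apply HL. Qed.
Lemma absMJ x y : meet x (join x y) = x. Proof. apply HL. Qed.
Lemma absJM x y : join x (meet x y) = x. Proof. apply HL. Qed.

Lemma meet_idem x : meet x x = x.
Proof. rewrite <- (absJM x x) at 2. apply absMJ. Qed.

Lemma le_refl (x : C) : le x x. Proof. apply meet_idem. Qed.
Lemma le_trans (x y z : C) : le x y -> le y z -> le x z.
Proof. unfold le. intros H1 H2. rewrite <- H1, <- meetA, H2. auto. Qed.
Lemma le_antisym (x y : C) : le x y -> le y x -> x = y.
Proof. unfold le. intros H1 H2. rewrite <- H1, meetC. auto. Qed.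
Lemma meet_l x y : le (meet x y) x.
Proof. unfold le. rewrite (meetC x y), <- meetA, meet_idem. auto. Qed.
Lemma meet_r x y : le (meet x y) y.
Proof. unfold le. rewrite <- meetA, meet_idem. auto. Qed.
Lemma meet_glb x y z : le z x -> le z y -> le z (meet x y).
Proof. unfold le. intros H1 H2. rewrite meetA, H1, H2. auto. Qed.
Lemma le_join_iff x y : le x y <-> join x y = y.
Proof.
  unfold le; split; intro H.
  - rewrite <- H, joinC, meetC. apply absJM.
  - rewrite <- H. apply absMJ.
Qed.
Lemma join_l x y : le x (join x y). Proof. apply absMJ. Qed.
Lemma join_r x y : le y (join x y). Proof. rewrite joinC. apply absMJ. Qed.
Lemma join_lub x y z : le x z -> le y z -> le (join x y) z.
Proof.
  rewrite !le_join_iff. intros H1 H2. rewrite <- joinA, H2, H1. auto.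
Qed.

Lemma res1 x y z : le (mul x y) z <-> le y (ldiv x z).
Proof. apply (proj1 (proj2 (proj2 HC)) x y z). Qed.
Lemma res2 x y z : le (mul x y) z <-> le x (rdiv z y).
Proof. rewrite res1. apply (proj1 (proj2 (proj2 HC)) x y z). Qed.
Lemma mul1l x : mul one x = x. Proof. apply (proj1 (proj2 HC)). Qed.
Lemma mul1r x : mul x one = x. Proof. apply (proj1 (proj2 HC)). Qed.
Lemma integ x : le x one. Proof. apply (proj2 (proj2 (proj2 (proj2 HC)))). Qed.

Lemma mul_mono_r x y y' : le y y' -> le (mul x y) (mul x y').
Proof. intro H. apply res1. eapply le_trans; [exact H|]. apply res1, le_refl. Qed.
Lemma mul_mono_l x x' y : le x x' -> le (mul x y) (mul x' y).
Proof. intro H. apply res2. eapply le_trans; [exact H|]. apply res2, le_refl. Qed.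
Lemma mul_mono x x' y y' : le x x' -> le y y' -> le (mul x y) (mul x' y').
Proof. intros. eapply le_trans. apply mul_mono_l; eauto. apply mul_mono_r; auto. Qed.
Lemma mul_le_l x y : le (mul x y) x.
Proof. rewrite <- (mul1r x) at 2. apply mul_mono_r, integ. Qed.
Lemma mul_le_r x y : le (mul x y) y.
Proof. rewrite <- (mul1l y) at 2. apply mul_mono_l, integ. Qed.
Lemma join_mul_l a b t : le (mul (join a b) t) (join (mul a t) (mul b t)).
Proof. apply res2, join_lub; apply res2. apply join_l. apply join_r. Qed.
Lemma join_mul_r a b t : le (mul t (join a b)) (join (mul t a) (mul t b)).
Proof. apply res1, join_lub; apply res1. apply join_l. apply join_r. Qed.

Lemma HI : is_interior C. Proof. apply HC. Qed.
Lemma bang_one : le one (bang one). Proof. destruct HI as (h1&h2&h3&h4&h5). apply h1. Qed.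
Lemma bang_mul x y : le (mul (bang x) (bang y)) (bang (mul x y)). Proof. destruct HI as (h1&h2&h3&h4&h5). apply h2. Qed.
Lemma bang_le x : le (bang x) x. Proof. destruct HI as (h1&h2&h3&h4&h5). apply h3. Qed.
Lemma bang_bang x : le (bang x) (bang (bang x)). Proof. destruct HI as (h1&h2&h3&h4&h5). apply h4. Qed.
Lemma bang_mono x y : le x y -> le (bang x) (bang y). Proof. destruct HI as (h1&h2&h3&h4&h5). apply h5. Qed.
End CLemmas.

End C1.

Section Frame.
Variable C : IGroupoid.
Variable HC : integral_interior_rlu C.
Variable A : Type.
Variable val : A -> C.

Local Notation cmul := (Defs.mul C). Local Notation cone := (Defs.one C).
Local Notation cbang := (Defs.bang C).
Local Notation T := (tree A).
Local Notation le_refl := (C1.le_refl C HC).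
Local Notation le_trans := (C1.le_trans C HC).
Local Notation le_antisym := (C1.le_antisym C HC).
Local Notation meet_l := (C1.meet_l C HC).
Local Notation meet_r := (C1.meet_r C HC).
Local Notation meet_glb := (C1.meet_glb C HC).
Local Notation join_l := (C1.join_l C HC).
Local Notation join_r := (C1.join_r C HC).
Local Notation join_lub := (C1.join_lub C HC).
Local Notation res1 := (C1.res1 C HC).
Local Notation res2 := (C1.res2 C HC).
Local Notation mul1l := (C1.mul1l C HC).
Local Notation mul1r := (C1.mul1r C HC).
Local Notation integ := (C1.integ C HC).
Local Notation mul_mono_r := (C1.mul_mono_r C HC).
Local Notation mul_mono_l := (C1.mul_mono_l C HC).
Local Notation mul_mono := (C1.mul_mono C HC).
Local Notation mul_le_l := (C1.mul_le_l C HC).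
Local Notation mul_le_r := (C1.mul_le_r C HC).
Local Notation join_mul_l := (C1.join_mul_l C HC).
Local Notation join_mul_r := (C1.join_mul_r C HC).
Local Notation bang_one := (C1.bang_one C HC).
Local Notation bang_mul := (C1.bang_mul C HC).
Local Notation bang_le := (C1.bang_le C HC).
Local Notation bang_bang := (C1.bang_bang C HC).
Local Notation bang_mono := (C1.bang_mono C HC).
Local Notation le_join_iff := (C1.le_join_iff C HC).

Fixpoint evh (h : C) (t : T) : C :=
  match t with
  | Eps => cone | Hole => h | Leaf a => val a
  | Mul a b => cmul (evh h a) (evh h b) | Bang a => cbang (evh h a) end.
Definition ev := evh cone.

Inductive ctx := CH | CL (u : ctx) (t : T) | CR (t : T) (u : ctx).
Fixpoint ceval (u : ctx) (x : C) : C :=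
  match u with CH => x | CL u t => ceval u (cmul x (ev t)) | CR t u => ceval u (cmul (ev t) x) end.

Definition Tst (u : ctx) (a : A) (w : T) : Prop := le (ceval u (ev w)) (val a).
Definition cl (X : T -> Prop) (w : T) : Prop :=
  forall u a, (forall v, X v -> Tst u a v) -> Tst u a w.
Definition closed (X : T -> Prop) := forall w, cl X w -> X w.

Lemma ceval_mono u : forall x y, le x y -> le (ceval u x) (ceval u y).
Proof.
  induction u; intros x y H; simpl; auto.
  - apply IHu, mul_mono_l; auto.
  - apply IHu, mul_mono_r; auto.
Qed.

Lemma ceval_join u : forall x y d, le (ceval u x) d -> le (ceval u y) d ->
  le (ceval u (Defs.join C x y)) d.
Proof.
  induction u; intros x y d H1 H2; simpl in *.
  - apply join_lub; auto.
  - eapply le_trans; [|apply (IHu _ _ _ H1 H2)]. apply ceval_mono, join_mul_l; auto.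
  - eapply le_trans; [|apply (IHu _ _ _ H1 H2)]. apply ceval_mono, join_mul_r; auto.
Qed.

Lemma Tst_down u a v w : Tst u a v -> le (ev w) (ev v) -> Tst u a w.
Proof. unfold Tst. intros H1 H2. eapply le_trans; [|exact H1]. apply ceval_mono; auto. Qed.

Lemma cl_incl X w : X w -> cl X w.
Proof. intros H u a Ht. auto. Qed.
Lemma cl_closed X : closed (cl X).
Proof. intros w Hw u a H. apply Hw. intros v Hv. apply Hv. exact H. Qed.
Lemma cl_min X Y : closed Y -> (forall w, X w -> Y w) -> forall w, cl X w -> Y w.
Proof. intros HY HXY w Hw. apply HY. intros u a H. apply Hw. intros v Hv. apply H, HXY, Hv. Qed.
Lemma cl_sub X Y : (forall w, X w -> cl Y w) -> forall w, cl X w -> cl Y w.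
Proof. intros H. apply cl_min; auto. apply cl_closed. Qed.
Lemma Tst_closed u a : closed (Tst u a).
Proof. intros w Hw. apply Hw. auto. Qed.
Lemma closed_down X v w : closed X -> X v -> le (ev w) (ev v) -> X w.
Proof. intros HX Hv Hle. apply HX. intros u a H. eapply Tst_down; eauto. Qed.
Lemma cl_down X v w : cl X v -> le (ev w) (ev v) -> cl X w.
Proof. intros. eapply closed_down; eauto. apply cl_closed. Qed.

Lemma closed_mull Z t : closed Z -> closed (fun p => Z (Mul p t)).
Proof.
  intros HZ p Hp. apply HZ. intros u a H.
  exact (Hp (CL u t) a (fun v Hv => H _ Hv)).
Qed.
Lemma closed_mulr Z t : closed Z -> closed (fun p => Z (Mul t p)).
Proof.
  intros HZ p Hp. apply HZ. intros u a H.
  exact (Hp (CR t u) a (fun v Hv => H _ Hv)).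
Qed.

Lemma nucl X Y Z : closed Z -> (forall a b, X a -> Y b -> Z (Mul a b)) ->
  forall p q, cl X p -> cl Y q -> Z (Mul p q).
Proof.
  intros HZ H p q Hp Hq.
  assert (H1 : forall b, Y b -> Z (Mul p b)).
  { intros b Hb. apply (cl_min X (fun p => Z (Mul p b))); [apply closed_mull; auto| |auto].
    intros; apply H; auto. }
  apply (cl_min Y (fun q => Z (Mul p q))); [apply closed_mulr; auto|auto|auto].
Qed.

Definition star (X Y : T -> Prop) (w : T) : Prop := exists a b, X a /\ Y b /\ w = Mul a b.
Definition bangs (X : T -> Prop) (w : T) : Prop := exists v, X v /\ w = Bang v.

Definition Dcar := {X : T -> Prop | closed X}.

Lemma Dext (X Y : Dcar) : (forall w, proj1_sig X w <-> proj1_sig Y w) -> X = Y.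
Proof.
  destruct X as [X HX], Y as [Y HY]; simpl. intro H.
  assert (X = Y) by (apply functional_extensionality; intro; apply propositional_extensionality; auto).
  subst. f_equal. apply proof_irrelevance.
Qed.

Lemma closed_meet (X Y : Dcar) : closed (fun w => proj1_sig X w /\ proj1_sig Y w).
Proof.
  intros w Hw. split; [apply (proj2_sig X)|apply (proj2_sig Y)];
    (eapply cl_sub; [|exact Hw]); intros v [H1 H2]; apply cl_incl; auto.
Qed.
Lemma closed_ldiv (X Z : Dcar) : closed (fun y => forall x, proj1_sig X x -> proj1_sig Z (Mul x y)).
Proof.
  intros w Hw x Hx. apply (closed_mulr _ x (proj2_sig Z)).
  eapply cl_sub; [|exact Hw]. intros v Hv. apply cl_incl. auto.
Qed.
Lemma closed_rdiv (Z Y : Dcar) : closed (fun x => forall y, proj1_sig Y y -> proj1_sig Z (Mul x y)).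
Proof.
  intros w Hw y Hy. apply (closed_mull _ y (proj2_sig Z)).
  eapply cl_sub; [|exact Hw]. intros v Hv. apply cl_incl. auto.
Qed.
Lemma closed_top : closed (fun _ => True). Proof. intros w _; exact I. Qed.

Definition dmeet (X Y : Dcar) : Dcar := exist _ _ (closed_meet X Y).
Definition djoin (X Y : Dcar) : Dcar :=
  exist _ (cl (fun w => proj1_sig X w \/ proj1_sig Y w)) (cl_closed _).
Definition dmul (X Y : Dcar) : Dcar :=
  exist _ (cl (star (proj1_sig X) (proj1_sig Y))) (cl_closed _).
Definition dldiv (X Z : Dcar) : Dcar := exist _ _ (closed_ldiv X Z).
Definition drdiv (Z Y : Dcar) : Dcar := exist _ _ (closed_rdiv Z Y).
Definition done : Dcar := exist _ _ closed_top.
Definition dbang (X : Dcar) : Dcar := exist _ (cl (bangs (proj1_sig X))) (cl_closed _).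

Definition D : IGroupoid :=
  {| car := Dcar; meet := dmeet; join := djoin; mul := dmul; ldiv := dldiv; rdiv := drdiv;
     one := done; bang := dbang |}.

Lemma leD (X Y : D) : le X Y <-> (forall w, proj1_sig X w -> proj1_sig Y w).
Proof.
  unfold le; split.
  - intros H w Hw. rewrite <- H in Hw. apply Hw.
  - intro H. apply Dext. simpl. intuition.
Qed.


Lemma ev_mul a b : ev (Mul a b) = cmul (ev a) (ev b). Proof. reflexivity. Qed.
Lemma ev_bang a : ev (Bang a) = cbang (ev a). Proof. reflexivity. Qed.
Lemma ev_eps : ev Eps = cone. Proof. reflexivity. Qed.

Lemma D_lattice : is_lattice D.
Proof.
  repeat split.
  - intros X Y Z. apply Dext. simpl. tauto.
  - intros X Y Z. apply Dext. simpl. intro w. split; apply cl_sub.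
    + intros v [H|H]. apply cl_incl; left; apply cl_incl; left; auto.
      revert v H. apply cl_sub. intros v [H|H].
      apply cl_incl; left; apply cl_incl; right; auto. apply cl_incl; right; auto.
    + intros v [H|H]. 2: apply cl_incl; right; apply cl_incl; right; auto.
      revert v H. apply cl_sub. intros v [H|H].
      apply cl_incl; left; auto. apply cl_incl; right; apply cl_incl; left; auto.
  - intros X Y. apply Dext. simpl. tauto.
  - intros X Y. apply Dext. simpl. intro w. split; apply cl_sub; intros v [H|H]; apply cl_incl; tauto.
  - intros X Y. apply Dext. simpl. intro w. split; [tauto|]. intro H; split; auto. apply cl_incl; auto.
  - intros X Y. apply Dext. simpl. intro w. split.
    + apply cl_min. apply (proj2_sig X). tauto.
    + intro; apply cl_incl; auto.
Qed.

Lemma D_unital : is_unital_groupoid D.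
Proof.
  intro X. split; apply Dext; simpl; intro w; split.
  - apply cl_min. apply (proj2_sig X). intros v [a [b [_ [Hb ->]]]].
    eapply closed_down; [apply (proj2_sig X)|exact Hb|]. apply mul_le_r.
  - intro H. apply (cl_down _ (Mul Eps w)). apply cl_incl. exists Eps, w. simpl; auto.
    rewrite ev_mul, ev_eps, mul1l. apply le_refl.
  - apply cl_min. apply (proj2_sig X). intros v [a [b [Ha [_ ->]]]].
    eapply closed_down; [apply (proj2_sig X)|exact Ha|]. apply mul_le_l.
  - intro H. apply (cl_down _ (Mul w Eps)). apply cl_incl. exists w, Eps. simpl; auto.
    rewrite ev_mul, ev_eps, mul1r. apply le_refl.
Qed.

Lemma D_res : is_residuated D.
Proof.
  intros X Y Z. rewrite !leD. simpl. split; split.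
  - intros H y Hy x Hx. apply H. apply cl_incl. exists x, y; auto.
  - intro H. apply cl_min. apply (proj2_sig Z). intros w [a [b [Ha [Hb ->]]]]. auto.
  - intros H x Hx y Hy. apply H; auto.
  - intros H y Hy x Hx. apply H; auto.
Qed.

Lemma D_integral : is_integral D.
Proof. intro X. apply leD. simpl. auto. Qed.

Lemma D_interior : is_interior D.
Proof.
  repeat split.
  - apply leD. simpl. intros w _. apply (cl_down _ (Bang Eps)).
    apply cl_incl. exists Eps. split; [exact I|reflexivity].
    rewrite ev_bang, ev_eps. eapply le_trans. apply integ. apply bang_one.
  - intros X Y. apply leD. simpl. apply cl_min. apply cl_closed.
    intros w [p [q [Hp [Hq ->]]]]. revert p q Hp Hq.
    apply (nucl (bangs (proj1_sig X)) (bangs (proj1_sig Y))). apply cl_closed.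
    intros a b [v [Hv ->]] [v' [Hv' ->]].
    apply (cl_down _ (Bang (Mul v v'))). apply cl_incl. exists (Mul v v'). split; auto.
    apply cl_incl. exists v, v'. auto.
    rewrite !ev_bang, !ev_mul, !ev_bang. apply bang_mul.
  - intros X. apply leD. simpl. apply cl_min. apply (proj2_sig X).
    intros w [v [Hv ->]]. eapply closed_down; [apply (proj2_sig X)|exact Hv|]. apply bang_le.
  - intros X. apply leD. simpl. apply cl_min. apply cl_closed.
    intros w [v [Hv ->]]. apply (cl_down _ (Bang (Bang v))). apply cl_incl. exists (Bang v).
    split; auto. apply cl_incl. exists v; auto. rewrite !ev_bang. apply bang_bang.
  - intros X Y. rewrite !leD. simpl. intro H. apply cl_sub. intros w [v [Hv ->]].
    apply cl_incl. exists v; auto.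
Qed.

Lemma D_iirlu : integral_interior_rlu D.
Proof. repeat split; try apply D_lattice; try apply D_unital; try apply D_res; try apply D_interior; apply D_integral. Qed.

Lemma D_sat q : satisfies C q -> satisfies D q.
Proof.
  destruct q; simpl; intro HE.
  - intros X Y. apply leD. simpl. apply cl_min. apply cl_closed.
    intros w [p [q [Hp [Hq ->]]]]. apply (cl_down _ (Mul q p)). apply cl_incl. exists q, p; auto.
    rewrite !ev_mul. apply HE.
  - intros X. apply leD. simpl. intros w Hw. apply (cl_down _ (Mul w w)).
    apply cl_incl. exists w, w; auto. rewrite ev_mul. apply HE.
  - intros X. apply leD. simpl. apply cl_min. apply cl_closed.
    intros w [v [Hv ->]]. apply (cl_down _ (Mul (Bang v) (Bang v))).
    apply cl_incl. exists (Bang v), (Bang v). split; [|split; auto]; apply cl_incl; exists v; auto.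
    rewrite ev_mul, !ev_bang. apply HE.
  - intros X Y. apply Dext. simpl. intro w. split.
    + apply cl_min. apply cl_closed. intros w' [p [q [Hp [Hq ->]]]].
      apply (nucl (bangs (proj1_sig X)) (proj1_sig Y)); [apply cl_closed| |exact Hp|apply cl_incl; exact Hq].
      intros a b [v [Hv ->]] Hb. apply (cl_down _ (Mul b (Bang v))). apply cl_incl.
      exists b, (Bang v). split; auto. split; auto. apply cl_incl. exists v; auto.
      rewrite !ev_mul, ev_bang, HE. apply le_refl.
    + apply cl_min. apply cl_closed. intros w' [p [q [Hp [Hq ->]]]].
      apply (nucl (proj1_sig Y) (bangs (proj1_sig X))); [apply cl_closed| |apply cl_incl; exact Hp|exact Hq].
      intros a b Ha [v [Hv ->]]. apply (cl_down _ (Mul (Bang v) a)). apply cl_incl.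
      exists (Bang v), a. split; auto. apply cl_incl. exists v; auto.
      rewrite !ev_mul, ev_bang, HE. apply le_refl.
  - intros X Y Z. apply Dext. simpl. intro w. split.
    + apply cl_min. apply cl_closed. intros w' [p [q [Hp [Hq ->]]]].
      apply (nucl (bangs (proj1_sig X)) (star (proj1_sig Y) (proj1_sig Z))); [apply cl_closed| |exact Hp|exact Hq].
      intros a b [v [Hv ->]] [y [z [Hy [Hz ->]]]].
      apply (cl_down _ (Mul (Mul (Bang v) y) z)). apply cl_incl.
      exists (Mul (Bang v) y), z. split; auto. apply cl_incl. exists (Bang v), y. split; auto.
      apply cl_incl. exists v; auto.
      rewrite !ev_mul, ev_bang, HE. apply le_refl.
    + apply cl_min. apply cl_closed. intros w' [p [z [Hp [Hz ->]]]].
      apply (nucl (star (cl (bangs (proj1_sig X))) (proj1_sig Y)) (proj1_sig Z)); [apply cl_closed| |exact Hp|apply cl_incl; exact Hz].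
      intros a b [p' [y [Hp' [Hy ->]]]] Hb.
      set (LHS := cl (star (cl (bangs (proj1_sig X))) (cl (star (proj1_sig Y) (proj1_sig Z))))).
      assert (Hc : closed (fun q => LHS (Mul q b))) by (apply closed_mull, cl_closed).
      revert p' Hp'. apply (cl_min _ _ (closed_mull _ y Hc)).
      intros w0 [v [Hv ->]]. apply (cl_down _ (Mul (Bang v) (Mul y b))). apply cl_incl.
      exists (Bang v), (Mul y b). split. apply cl_incl; exists v; auto. split; auto.
      apply cl_incl. exists y, b; auto.
      rewrite !ev_mul, ev_bang, HE. apply le_refl.
  - intros X Y Z. apply Dext. simpl. intro w. split.
    + apply cl_min. apply cl_closed. intros w' [x [q [Hx [Hq ->]]]].
      apply (nucl (proj1_sig X) (star (proj1_sig Y) (cl (bangs (proj1_sig Z))))); [apply cl_closed| |apply cl_incl; exact Hx|exact Hq].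
      intros a b Ha [y [r [Hy [Hr ->]]]].
      set (RHS := cl (star (cl (star (proj1_sig X) (proj1_sig Y))) (cl (bangs (proj1_sig Z))))).
      assert (Hc : closed (fun q => RHS (Mul a q))) by (apply closed_mulr, cl_closed).
      revert r Hr. apply (cl_min _ _ (closed_mulr _ y Hc)).
      intros w0 [v [Hv ->]]. apply (cl_down _ (Mul (Mul a y) (Bang v))). apply cl_incl.
      exists (Mul a y), (Bang v). split. apply cl_incl; exists a, y; auto. split; auto.
      apply cl_incl. exists v; auto.
      rewrite !ev_mul, ev_bang, HE. apply le_refl.
    + apply cl_min. apply cl_closed. intros w' [p [q [Hp [Hq ->]]]].
      apply (nucl (star (proj1_sig X) (proj1_sig Y)) (bangs (proj1_sig Z))); [apply cl_closed| |exact Hp|exact Hq].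
      intros a b [x [y [Hx [Hy ->]]]] [v [Hv ->]].
      apply (cl_down _ (Mul x (Mul y (Bang v)))). apply cl_incl.
      exists x, (Mul y (Bang v)). split; auto. split; auto. apply cl_incl. exists y, (Bang v).
      split; auto. split; auto. apply cl_incl; exists v; auto.
      rewrite !ev_mul, ev_bang, HE. apply le_refl.
Qed.

Definition hmap (c : C) : D := exist _ (cl (fun w => le (ev w) c)) (cl_closed _).

Definition inR (c : C) := exists a, val a = c.

Lemma hE c : inR c -> forall w, proj1_sig (hmap c) w <-> le (ev w) c.
Proof.
  intros [a Ha] w. simpl. split.
  - intro Hw. rewrite <- Ha. apply (Hw CH a). intros v Hv. unfold Tst. simpl. rewrite Ha. exact Hv.
  - intro H. exact (cl_incl (fun w => le (ev w) c) w H).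
Qed.

Lemma hleaf c : inR c -> exists a, proj1_sig (hmap c) (Leaf a) /\ ev (Leaf a) = c.
Proof.
  intros [a Ha]. exists a. split. apply hE. exists a; auto. change (le (val a) c). rewrite Ha. apply le_refl. exact Ha.
Qed.

Lemma h_inj b c : inR b -> inR c -> hmap b = hmap c -> b = c.
Proof.
  intros Hb Hc E. destruct (hleaf b Hb) as [a [Ha Ea]]. destruct (hleaf c Hc) as [a' [Ha' Ea']].
  apply le_antisym.
  - rewrite E in Ha. apply (hE c Hc) in Ha. rewrite Ea in Ha. auto.
  - rewrite <- E in Ha'. apply (hE b Hb) in Ha'. rewrite Ea' in Ha'. auto.
Qed.

Lemma h_meet b c : inR b -> inR c -> inR (Defs.meet C b c) ->
  hmap (Defs.meet C b c) = dmeet (hmap b) (hmap c).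
Proof.
  intros Hb Hc Hbc. apply Dext. intro w.
  change (proj1_sig (hmap (Defs.meet C b c)) w <-> proj1_sig (hmap b) w /\ proj1_sig (hmap c) w).
  rewrite !hE by auto.
  split.
  - intro H. split; (eapply le_trans; [exact H|]). apply meet_l. apply meet_r.
  - intros [H1 H2]. apply meet_glb; auto.
Qed.

Lemma h_join b c : inR b -> inR c -> inR (Defs.join C b c) ->
  hmap (Defs.join C b c) = djoin (hmap b) (hmap c).
Proof.
  intros Hb Hc Hbc. apply Dext. intro w. rewrite hE by auto. simpl. split.
  - intros Hw u a H. destruct (hleaf b Hb) as [ab [Hab Eb]]. destruct (hleaf c Hc) as [ac [Hac Ec]].
    assert (H1 := H _ (or_introl Hab)). assert (H2 := H _ (or_intror Hac)).
    unfold Tst in *. rewrite Eb in H1. rewrite Ec in H2.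
    eapply le_trans. apply ceval_mono. exact Hw. apply ceval_join; auto.
  - intro Hw. apply (hE _ Hbc). revert w Hw. apply cl_min. apply (proj2_sig (hmap _)).
    intros v [Hv|Hv]; apply (hE _ Hbc).
    + apply (hE _ Hb) in Hv. eapply le_trans; [exact Hv|]. apply join_l.
    + apply (hE _ Hc) in Hv. eapply le_trans; [exact Hv|]. apply join_r.
Qed.

Lemma h_mul b c : inR b -> inR c -> inR (cmul b c) ->
  hmap (cmul b c) = dmul (hmap b) (hmap c).
Proof.
  intros Hb Hc Hbc. apply Dext. intro w. rewrite hE by auto. simpl. split.
  - intro Hw. destruct (hleaf b Hb) as [ab [Hab Eb]]. destruct (hleaf c Hc) as [ac [Hac Ec]].
    apply (cl_down _ (Mul (Leaf ab) (Leaf ac))). apply cl_incl. exists (Leaf ab), (Leaf ac). auto.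
    rewrite ev_mul, Eb, Ec. auto.
  - intro Hw. apply (hE _ Hbc). revert w Hw. apply cl_min. apply (proj2_sig (hmap _)).
    intros v [x [y [Hx [Hy ->]]]]. apply (hE _ Hbc). apply (hE _ Hb) in Hx. apply (hE _ Hc) in Hy.
    rewrite ev_mul. apply mul_mono; auto.
Qed.

Lemma h_ldiv b c : inR b -> inR c -> inR (Defs.ldiv C b c) ->
  hmap (Defs.ldiv C b c) = dldiv (hmap b) (hmap c).
Proof.
  intros Hb Hc Hbc. apply Dext. intro w. rewrite hE by auto.
  change (le (ev w) (Defs.ldiv C b c) <-> forall x, proj1_sig (hmap b) x -> proj1_sig (hmap c) (Mul x w)).
  split.
  - intros Hw x Hx. apply (hE _ Hb) in Hx. apply (hE _ Hc). rewrite ev_mul.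
    eapply le_trans. apply mul_mono_l. exact Hx. apply res1. exact Hw.
  - intro H. destruct (hleaf b Hb) as [ab [Hab Eb]]. specialize (H _ Hab).
    apply (hE _ Hc) in H. rewrite ev_mul, Eb in H. apply res1. auto.
Qed.

Lemma h_rdiv b c : inR b -> inR c -> inR (Defs.rdiv C c b) ->
  hmap (Defs.rdiv C c b) = drdiv (hmap c) (hmap b).
Proof.
  intros Hb Hc Hbc. apply Dext. intro w. rewrite hE by auto.
  change (le (ev w) (Defs.rdiv C c b) <-> forall y, proj1_sig (hmap b) y -> proj1_sig (hmap c) (Mul w y)).
  split.
  - intros Hw y Hy. apply (hE _ Hb) in Hy. apply (hE _ Hc). rewrite ev_mul.
    eapply le_trans. apply mul_mono_r. exact Hy. apply res2. exact Hw.
  - intro H. destruct (hleaf b Hb) as [ab [Hab Eb]]. specialize (H _ Hab).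
    apply (hE _ Hc) in H. rewrite ev_mul, Eb in H. apply res2. auto.
Qed.

Lemma h_one : hmap cone = done.
Proof. apply Dext. intro w. simpl. split; auto. intros _. apply cl_incl. apply integ. Qed.

Lemma h_bang b : inR b -> inR (cbang b) -> hmap (cbang b) = dbang (hmap b).
Proof.
  intros Hb Hbb. apply Dext. intro w. rewrite hE by auto. simpl. split.
  - intro Hw. destruct (hleaf b Hb) as [ab [Hab Eb]].
    apply (cl_down _ (Bang (Leaf ab))). apply cl_incl. exists (Leaf ab). auto.
    rewrite ev_bang, Eb. auto.
  - intro Hw. apply (hE _ Hbb). revert w Hw. apply cl_min. apply (proj2_sig (hmap _)).
    intros v [x [Hx ->]]. apply (hE _ Hbb). apply (hE _ Hb) in Hx.
    rewrite ev_bang. apply bang_mono; auto.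
Qed.

Fixpoint subst (s r : T) : T :=
  match s with Hole => r | Mul a b => Mul (subst a r) (subst b r) | Bang a => Bang (subst a r) | _ => s end.
Definition noH (t : T) := subst t Eps.
Fixpoint toT (u : ctx) : T :=
  match u with CH => Hole | CL u t => subst (toT u) (Mul Hole (noH t))
  | CR t u => subst (toT u) (Mul (noH t) Hole) end.

Lemma evh_subst x s r : evh x (subst s r) = evh (evh x r) s.
Proof. induction s; simpl; congruence. Qed.
Lemma evh_noH x t : evh x (noH t) = ev t.
Proof. unfold noH. rewrite evh_subst. reflexivity. Qed.
Lemma evh_toT u : forall x, evh x (toT u) = ceval u x.
Proof.
  induction u; intro x; simpl; auto; rewrite evh_subst; simpl; rewrite evh_noH; apply IHu.
Qed.
Lemma emb_ev t s : emb t s -> forall x, le (evh x s) (evh x t).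
Proof.
  induction 1; intro x; simpl.
  - apply le_refl. - apply le_refl. - apply le_refl.
  - eapply le_trans. apply mul_le_l. auto.
  - eapply le_trans. apply mul_le_r. auto.
  - apply mul_mono; auto.
  - eapply le_trans. apply bang_le. auto.
  - apply bang_mono; auto.
Qed.
Lemma ctx_mono u u' a w : emb (toT u) (toT u') -> Tst u a w -> Tst u' a w.
Proof.
  unfold Tst. intros He H. eapply le_trans; [|exact H].
  rewrite <- !evh_toT. apply emb_ev; auto.
Qed.

Definition basicP (S : T -> Prop) := exists u a, S = Tst u a.

Hypothesis HA : forall f : nat -> A, exists i j, i < j /\ f i = f j.

Lemma basic_wqo : forall f : nat -> (T -> Prop), (forall n, basicP (f n)) -> exists i j, i < j /\ f i = f j.
Proof.
  intros f Hf. apply NNPP; intro Hne.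
  assert (Hg : forall n, {p : ctx * A | f n = Tst (fst p) (snd p)}).
  { intro n. apply constructive_indefinite_description. destruct (Hf n) as [u [a E]]. exists (u, a). auto. }
  set (g := fun n => proj1_sig (Hg n)).
  assert (Eg : forall n, f n = Tst (fst (g n)) (snd (g n))) by (intro n; apply (proj2_sig (Hg n))).
  assert (W := wqo_prod (fun _ : A => True) (fun _ : tree A => True) eq emb
     (fun x y z (H1 : x = y) H2 => eq_trans H1 H2)
     (fun f' _ => HA f') (kruskal HA)).
  destruct (wqo_subseq _ _ W (fun k => (snd (g k), toT (fst (g k))))) as [phi [Hphi Hc]].
  { intro n; simpl; auto. }
  simpl in Hc.
  assert (Hstep : forall k w, f (phi k) w -> f (phi (S k)) w).
  { intros k w. rewrite !Eg. destruct (Hc k) as [E1 E2]. rewrite E1. apply ctx_mono; auto. }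
  assert (Hchain : forall k l, k <= l -> forall w, f (phi k) w -> f (phi l) w).
  { intros k l Hkl. induction Hkl; auto. }
  assert (Hd : forall k, exists w, f (phi (S k)) w /\ ~ f (phi k) w).
  { intro k. apply NNPP; intro H. apply Hne. exists (phi k), (phi (S k)). split. apply Hphi.
    apply functional_extensionality; intro w. apply propositional_extensionality. split.
    apply Hstep. intro Hw. apply NNPP; intro Hn. apply H. eauto. }
  assert (Hw : forall k, {w | f (phi (S k)) w /\ ~ f (phi k) w}) by
    (intro k; apply constructive_indefinite_description; auto).
  set (ws := fun k => proj1_sig (Hw k)).
  destruct (kruskal HA ws (fun _ => I)) as [i [j [Hij He]]].
  destruct (proj2_sig (Hw i)) as [Hi1 Hi2]. destruct (proj2_sig (Hw j)) as [Hj1 Hj2].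
  apply Hj2. apply (Hchain (S i) j Hij). fold (ws i) in Hi1.
  assert (Hcl : closed (f (phi (S i)))).
  { rewrite Eg. apply Tst_closed. }
  eapply closed_down; [exact Hcl|exact Hi1|]. apply emb_ev; auto.
Qed.

Definition inter (l' : list (T -> Prop)) (w : T) : Prop :=
  forall S, In S l' -> basicP S -> S w.
Lemma inter_closed l' : closed (inter l').
Proof.
  intros w Hw S HS [u [a ->]]. apply Hw. intros v Hv. apply Hv; auto. exists u, a; auto.
Qed.

End Frame.

Lemma cover {X} (P : X -> Prop) :
  (forall f : nat -> X, (forall n, P (f n)) -> exists i j, i < j /\ f i = f j) ->
  exists L, forall x, P x -> In x L.
Proof.
  intro H. apply NNPP; intro Hn.
  assert (H1 : forall L, exists x, P x /\ ~ In x L).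
  { intro L. apply NNPP; intro H2. apply Hn. exists L. intros x Px. apply NNPP; intro H3. apply H2; eauto. }
  assert (Hp : forall L, {x | P x /\ ~ In x L}) by (intro L; apply constructive_indefinite_description; auto).
  set (pick := fun L => proj1_sig (Hp L)).
  set (g := fix g n := match n with 0 => nil | S n => pick (g n) :: g n end).
  assert (Hin : forall i j, i < j -> In (pick (g i)) (g j)).
  { intros i j Hij. induction Hij; simpl; auto. }
  destruct (H (fun n => pick (g n))) as [i [j [Hij E]]].
  { intro n. apply (proj2_sig (Hp (g n))). }
  apply (proj2 (proj2_sig (Hp (g j)))). fold (pick (g j)). rewrite <- E. auto.
Qed.

Fixpoint subs {X} (L : list X) : list (list X) :=
  match L with nil => nil :: nil | x :: L => map (cons x) (subs L) ++ subs L end.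

Lemma subs_ex {X} (Q : X -> Prop) L : exists l', In l' (subs L) /\
  (forall x, In x l' -> In x L /\ Q x) /\ (forall x, In x L -> Q x -> In x l').
Proof.
  induction L as [|x L IH]; simpl.
  - exists nil. split; auto. split; intros; contradiction.
  - destruct IH as [l' [H1 [H2 H3]]]. destruct (classic (Q x)) as [Hq|Hq].
    + exists (x :: l'). split. apply in_or_app; left; apply in_map; auto.
      split. intros y [<-|Hy]; auto. destruct (H2 y Hy); auto.
      intros y [<-|Hy] Hqy. left; auto. right; auto.
    + exists l'. split. apply in_or_app; right; auto.
      split. intros y Hy; destruct (H2 y Hy); auto.
      intros y [<-|Hy] Hqy. contradiction. auto.
Qed.


Lemma D_finite (C : IGroupoid) (HC : integral_interior_rlu C) (A : Type) (val : A -> C)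
  (HA : forall f : nat -> A, exists i j, i < j /\ f i = f j) : finite_type (D C A val).
Proof.
  destruct (cover (basicP C A val) (basic_wqo C HC A val HA)) as [Lb HLb].
  exists (map (fun l' => exist _ (inter C A val l') (inter_closed C A val l') : D C A val) (subs Lb)).
  intro X.
  destruct (subs_ex (fun S => forall w, proj1_sig X w -> S w) Lb) as [l' [H1 [H2 H3]]].
  replace X with (exist _ (inter C A val l') (inter_closed C A val l') : D C A val).
  - apply (in_map (fun l' => exist _ (inter C A val l') (inter_closed C A val l') : D C A val)). auto.
  - apply Dext. intro w. simpl. split.
    + intro Hw. apply (proj2_sig X). intros u a H. apply Hw; [|exists u, a; auto].
      apply H3; auto. apply HLb. exists u, a; auto.
    + intros Hw S HS _. apply (H2 S HS). auto.
Qed.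

Theorem mainTheorem4 (E : Eqn -> Prop) : FEP E.
Proof.
  intros C [HC HE] B [l Hl].
  set (A := {i | i < length l}).
  set (val := fun i : A => nth (proj1_sig i) l (one C)).
  assert (HA : forall f : nat -> A, exists i j, i < j /\ f i = f j).
  { intro f. destruct (pigeon (length l) (fun k => proj1_sig (f k)) (fun k => proj2_sig (f k)))
      as [i [j [Hij Hf]]].
    exists i, j. split; auto. destruct (f i) as [x px], (f j) as [y py]. simpl in Hf. subst.
    f_equal. apply proof_irrelevance. }
  assert (HR : forall x, B x -> inR C A val x).
  { intros x Hx. destruct (In_nth l x (one C) (Hl x Hx)) as [k [Hk Ek]].
    exists (exist _ k Hk). unfold val. simpl. auto. }
  exists (D C A val). split; [split|split].
  - apply D_iirlu; auto.
  - intros q Hq. apply D_sat; auto.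
  - apply D_finite; auto.
  - exists (hmap C A val). unfold partial_embedding.
    repeat split.
    + intros x y Hx Hy. apply h_inj; auto.
    + intros x y Hx Hy Hxy. apply h_meet; auto.
    + intros x y Hx Hy Hxy. apply h_join; auto.
    + intros x y Hx Hy Hxy. apply h_mul; auto.
    + intros x y Hx Hy Hxy. apply h_ldiv; auto.
    + intros x y Hx Hy Hxy. apply h_rdiv; auto.
    + intros _. apply h_one; auto.
    + intros x Hx Hbx. apply h_bang; auto.
Qed.
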